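(* Suppose that a $(v,k,\lambda)$-BIBD has a nesting. Then $k\ge 2\lambda+1$.
   Context: A $(v,k,\lambda)$-BIBD is a pair $(X,\mathcal{A})$ where $X$ is a set of $v$ points and $\mathcal{A}$ is a multiset of $k$-subsets of $X$ (blocks) such that every pair of distinct points lies in exactly $\lambda$ blocks; a partial $(v,k,\lambda)$-BIBD is defined the same way except that every pair lies in at most $\lambda$ blocks. A nesting of a $(v,k,\lambda)$-BIBD $(X,\mathcal{A})$ is a map $\phi:\mathcal{A}\to X$ such that $(X,\{A\cup\{\phi(A)\}: A\in\mathcal{A}\})$ (a multiset of blocks) is a partial $(v,k+1,\lambda+1)$-BIBD (in particular $\phi(A)\notin A$). *)

(* Defs.v *)
From mathcomp Require Import all_boot.
Set Implicit Arguments. Unset Strict Implicit. Unset Printing Implicit Defensive.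

(* Points are 'I_v; the multiset of blocks is a sequence of subsets
   (repetitions allowed). *)

Definition uniform_blocks (v k : nat) (A : seq {set 'I_v}) : Prop :=
  forall B, B \in A -> #|B| = k.

Definition pair_count (v : nat) (A : seq {set 'I_v}) (x y : 'I_v) : nat :=
  count (fun B : {set 'I_v} => (x \in B) && (y \in B)) A.

Definition is_BIBD (v k lam : nat) (A : seq {set 'I_v}) : Prop :=
  uniform_blocks k A /\
  forall x y : 'I_v, x != y -> pair_count A x y = lam.

Definition is_partial_BIBD (v k lam : nat) (A : seq {set 'I_v}) : Prop :=
  uniform_blocks k A /\
  forall x y : 'I_v, x != y -> pair_count A x y <= lam.

(* A nesting: a map from the blocks (indexed by position in the multiset,
   so that repeated blocks may be mapped to different points) to points
   such that the extended blocks A_i ∪ {phi i} form a partial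
   (v, k+1, lambda+1)-BIBD. *)
Definition extended_blocks (v : nat) (A : seq {set 'I_v})
    (phi : 'I_(size A) -> 'I_v) : seq {set 'I_v} :=
  [seq phi i |: nth set0 A i | i <- enum 'I_(size A)].

Definition is_nesting (v k lam : nat) (A : seq {set 'I_v})
    (phi : 'I_(size A) -> 'I_v) : Prop :=
  is_partial_BIBD k.+1 lam.+1 (extended_blocks phi).

(* Main.v *)
Require Import Defs.
From mathcomp Require Import all_boot.
From mathcomp Require Import zify.

Lemma block_pairs (v : nat) (B : {set 'I_v}) :
  \sum_(x : 'I_v) \sum_(y | y != x) (((x \in B) && (y \in B)) : nat)
  = #|B| * #|B|.-1.
Proof.
rewrite (bigID (mem B)) /= [X in _ + X]big1 ?addn0; last first.
  by move=> x /negbTE xB; rewrite big1 // => y _; rewrite xB.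
rewrite -sum_nat_const; apply: eq_bigr => x xB.
rewrite xB /= -big_mkcondr /= sum1_card.
rewrite (cardsD1 x B) xB add1n /=.
apply: eq_card => y; rewrite !inE; by [].
Qed.

Lemma pair_sum (v m : nat) (L : seq {set 'I_v}) :
  uniform_blocks m L ->
  \sum_(x : 'I_v) \sum_(y | y != x) pair_count L x y = size L * (m * m.-1).
Proof.
move=> U.
have pc : forall x y, pair_count L x y =
   \sum_(B <- L) (((x \in B) && (y \in B)) : nat).
  by move=> x y; rewrite /pair_count -sum1_count big_mkcond.
under eq_bigr => x _ do under eq_bigr => y _ do rewrite pc.
under eq_bigr => x _ do rewrite exchange_big /=.
rewrite exchange_big /=.
rewrite (eq_big_seq (fun _ => m * m.-1)); last first.
  by move=> B BL; rewrite block_pairs (U B BL).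
by rewrite big_const_seq count_predT iter_addn_0 mulnC.
Qed.

Theorem mainTheorem3 (v k lam : nat) (A : seq {set 'I_v}) :
  2 <= k -> k < v ->
  is_BIBD k lam A ->
  (exists phi : 'I_(size A) -> 'I_v, is_nesting k lam phi) ->
  2 * lam + 1 <= k.
Proof.
move=> k2 kv [UA PA] [phi [UE PE]].
have h1 := @pair_sum v k A UA.
have h2 := @pair_sum v k.+1 _ UE.
have sE : size (extended_blocks phi) = size A.
  by rewrite /extended_blocks size_map size_enum_ord.
rewrite sE /= in h2.
set N := v * v.-1.
have e1 : \sum_(x : 'I_v) \sum_(y | y != x) pair_count A x y = N * lam.
  rewrite (eq_bigr (fun _ => v.-1 * lam)); last first.
    move=> x _; rewrite (eq_bigr (fun _ => lam)); last by move=> y yx; apply: PA; rewrite eq_sym.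
    by rewrite sum_nat_const cardC1 card_ord.
  by rewrite sum_nat_const card_ord mulnA.
have e2 : \sum_(x : 'I_v) \sum_(y | y != x) pair_count (extended_blocks phi) x y
     <= N * lam.+1.
  apply: (@leq_trans (\sum_(x : 'I_v) v.-1 * lam.+1)); last first.
    by rewrite sum_nat_const card_ord mulnA.
  apply: leq_sum => x _.
  apply: (@leq_trans (\sum_(y | y != x) lam.+1)); last first.
    by rewrite sum_nat_const cardC1 card_ord.
  by apply: leq_sum => y yx; apply: PE; rewrite eq_sym.
rewrite h1 in e1; rewrite h2 in e2.
set b := size A in e1 e2.
have Npos : 0 < N by rewrite /N; nia.
have h3 : 2 * (b * k) <= N.
  have : b * (k.+1 * k) <= b * (k * k.-1) + N by nia.
  have -> : b * (k.+1 * k) = b * (k * k.-1) + 2 * (b * k).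
    rewrite -(prednK (ltnW k2)) /=; nia.
  by rewrite leq_add2l.
have h4 : N * (2 * lam) <= N * k.-1.
  rewrite mulnCA -e1.
  apply: leq_trans (leq_mul h3 (leqnn k.-1)); by rewrite !mulnA.
rewrite leq_pmul2l // in h4.
lia.
Qed.
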